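(* Let $n,p,K$ be positive integers with $K\ge 2$, and let $\boldsymbol{x}_1,\ldots,\boldsymbol{x}_n\in\mathbb{R}^p$ with $\boldsymbol{x}_i=(x_{i1},\ldots,x_{ip})^T$; set $x_{i0}=1$ for all $i$. A gating parameter is $\boldsymbol{w}=(w_{kj})_{1\le k\le K-1,\,0\le j\le p}$, where $w_{k0}\in\mathbb{R}$ and $\boldsymbol{w}_k=(w_{k1},\ldots,w_{kp})^T\in\mathbb{R}^p$. Define $$I_1(\boldsymbol{w}) = - \sum_{i=1}^n\log\Bigl[1+\sum_{k=1}^{K-1}e^{w_{k0}+\boldsymbol{x}_i^T \boldsymbol{w}_k}\Bigr].$$ Fix any $\boldsymbol{w}^{[s]}$, and set $C_i^{m} = 1+\sum_{k=1}^{K-1}e^{w_{k0}^{[s]}+\boldsymbol{x}_i^T \boldsymbol{w}_k^{[s]}}$ and $\pi_k(\boldsymbol{x}_i;\boldsymbol{w}^{[s]}) = e^{w_{k0}^{[s]}+\boldsymbol{x}_i^T \boldsymbol{w}_k^{[s]}}/C_i^m$. Define $$G_1(\boldsymbol{w}|\boldsymbol{w}^{[s]}) = \sum_{i=1}^n\Bigl[-\sum_{k=1}^{K-1}\frac{\pi_k(\boldsymbol{x}_i;\boldsymbol{w}^{[s]})}{p+1}\sum_{j=0}^p e^{(p+1)x_{ij}(w_{kj}-w_{kj}^{[s]})} - \log C_i^{m}+ 1- \frac{1}{C_i^{m}}\Bigr].$$ Then $I_1$ is a majorizer of $G_1(\cdot|\boldsymbol{w}^{[s]})$, i.e. $G_1(\cdot|\boldsymbol{w}^{[s]})$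 is a minorizing function of $I_1$ at $\boldsymbol{w}^{[s]}$: $I_1(\boldsymbol{w})\ge G_1(\boldsymbol{w}|\boldsymbol{w}^{[s]})$ for all $\boldsymbol{w}$, and $I_1(\boldsymbol{w}^{[s]}) = G_1(\boldsymbol{w}^{[s]}|\boldsymbol{w}^{[s]})$.
   Context: A function $G(x|x_m)$ is called a minorizing function of $F(x)$ at $x_m$ if $F(x)\ge G(x|x_m)$ for all $x$ and $F(x_m)=G(x_m|x_m)$. The function $I_1$ is the non-linear part of the expected complete-data log-likelihood of the softmax gating network $\pi_k(\boldsymbol{x};\boldsymbol{w})=\exp(w_{k0}+\boldsymbol{x}^T\boldsymbol{w}_k)/(1+\sum_{l=1}^{K-1}\exp(w_{l0}+\boldsymbol{x}^T\boldsymbol{w}_l))$ of a mixture-of-experts model with $K$ components. *)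

(* Defs.v *)
From HB Require Import structures.
From mathcomp Require Import all_boot all_order all_algebra.
From mathcomp Require Import all_classical all_reals all_analysis.
Set Implicit Arguments. Unset Strict Implicit. Unset Printing Implicit Defensive.
Import Order.TTheory GRing.Theory Num.Theory.
Local Open Scope ring_scope.

(* Covariates: x : 'I_n -> 'I_p -> R, x i j' = x_{i,j'+1}.
   Augmented covariate with x_{i0} = 1: index j : 'I_p.+1, j = 0 is the intercept. *)
Definition xaug (R : realType) (n p : nat) (x : 'I_n -> 'I_p -> R)
  (i : 'I_n) (j : 'I_p.+1) : R :=
  match @fintype.split 1 p j with
  | inl _ => 1
  | inr j' => x i j'
  end.

(* Gating parameter w : 'I_K.-1 -> 'I_p.+1 -> R, w k j = w_{k+1, j}. *)
(* linear predictor  w_{k0} + x_i^T w_k = sum_{j=0}^p x_{ij} w_{kj} *)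
Definition eta (R : realType) (n p K : nat) (x : 'I_n -> 'I_p -> R)
  (w : 'I_K.-1 -> 'I_p.+1 -> R) (i : 'I_n) (k : 'I_K.-1) : R :=
  \sum_(j < p.+1) xaug x i j * w k j.

Definition I1 (R : realType) (n p K : nat) (x : 'I_n -> 'I_p -> R)
  (w : 'I_K.-1 -> 'I_p.+1 -> R) : R :=
  - \sum_(i < n) ln (1 + \sum_(k < K.-1) expR (eta x w i k)).

Definition Cm (R : realType) (n p K : nat) (x : 'I_n -> 'I_p -> R)
  (ws : 'I_K.-1 -> 'I_p.+1 -> R) (i : 'I_n) : R :=
  1 + \sum_(k < K.-1) expR (eta x ws i k).

Definition gate (R : realType) (n p K : nat) (x : 'I_n -> 'I_p -> R)
  (ws : 'I_K.-1 -> 'I_p.+1 -> R) (i : 'I_n) (k : 'I_K.-1) : R :=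
  expR (eta x ws i k) / Cm x ws i.

Definition G1 (R : realType) (n p K : nat) (x : 'I_n -> 'I_p -> R)
  (w ws : 'I_K.-1 -> 'I_p.+1 -> R) : R :=
  \sum_(i < n)
    (- \sum_(k < K.-1) (gate x ws i k / (p.+1)%:R *
          \sum_(j < p.+1) expR ((p.+1)%:R * xaug x i j * (w k j - ws k j)))
     - ln (Cm x ws i) + 1 - (Cm x ws i)^-1).

Definition minorizes (T R : Type) (le : R -> R -> Prop)
  (F : T -> R) (G : T -> R) (xm : T) : Prop :=
  (forall y, le (G y) (F y)) /\ F xm = G xm.

(* Main.v *)
Require Import Defs.
From HB Require Import structures.
From mathcomp Require Import all_boot all_order all_algebra.
From mathcomp Require Import all_classical all_reals all_analysis.
From mathcomp Require Import lra ring.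
Import Order.TTheory GRing.Theory Num.Theory.
Local Open Scope ring_scope.

Lemma jensen_exp (R : realType) (N : nat) (y : 'I_N.+1 -> R) :
  N.+1%:R * expR ((\sum_j y j) / N.+1%:R) <= \sum_j expR (y j).
Proof.
set m := (\sum_j y j) / N.+1%:R.
have -> : \sum_j expR (y j) = \sum_j expR m * expR (y j - m).
  by apply: eq_bigr => j _; rewrite -expRD addrC subrK.
apply: le_trans (_ : \sum_(j < N.+1) expR m * (1 + (y j - m)) <= _); last first.
  apply: ler_sum => j _; apply: ler_wpM2l; [exact: expR_ge0|exact: expR_ge1Dx].
rewrite -mulr_sumr big_split /= sumrB !sumr_const card_ord.
have -> : (\sum_j y j) = m * N.+1%:R by rewrite /m divfK // pnatr_eq0.
rewrite -mulr_natr. lra.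
Qed.

Lemma ln_bound (R : realType) (C D : R) : 0 < C -> 0 < D ->
  ln C <= C / D + ln D - 1.
Proof.
move=> C0 D0.
have t0 : 0 < C / D by apply: divr_gt0.
have -> : ln C = ln D + ln (1 + (C / D - 1)).
  by rewrite [1 + _]addrC subrK -lnM ?posrE // mulrC divfK // gt_eqF.
have := @le_ln1Dx R (C / D - 1).
rewrite ltrBrDr addNr => /(_ t0). lra.
Qed.

Lemma Cm_gt0 (R : realType) (n p K : nat) (x : 'I_n -> 'I_p -> R)
  (ws : 'I_K.-1 -> 'I_p.+1 -> R) i : 0 < Cm x ws i.
Proof.
rewrite /Cm; apply: ltr_pwDl => //; apply: sumr_ge0 => k _; exact: expR_ge0.
Qed.

Lemma term_le (R : realType) (n p K : nat) (x : 'I_n -> 'I_p -> R)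
  (w ws : 'I_K.-1 -> 'I_p.+1 -> R) i :
  - \sum_(k < K.-1) (gate x ws i k / (p.+1)%:R *
          \sum_(j < p.+1) expR ((p.+1)%:R * xaug x i j * (w k j - ws k j)))
     - ln (Cm x ws i) + 1 - (Cm x ws i)^-1
  <= - ln (1 + \sum_(k < K.-1) expR (Defs.eta x w i k)).
Proof.
set D := Cm x ws i.
have D0 : 0 < D by exact: Cm_gt0.
set C := 1 + _.
have C0 : 0 < C.
  by apply: ltr_pwDl => //; apply: sumr_ge0 => k _; exact: expR_ge0.
have key : (C - 1) / D <= \sum_(k < K.-1) (gate x ws i k / (p.+1)%:R *
          \sum_(j < p.+1) expR ((p.+1)%:R * xaug x i j * (w k j - ws k j))).
  rewrite /C addrC addKr mulr_suml; apply: ler_sum => k _.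
  have N0 : 0 < (p.+1)%:R :> R by rewrite ltr0n.
  have J := @jensen_exp _ _ (fun j => (p.+1)%:R * xaug x i j * (w k j - ws k j)).
  have E : \sum_(j < p.+1) (p.+1)%:R * xaug x i j * (w k j - ws k j)
      = (p.+1)%:R * (Defs.eta x w i k - Defs.eta x ws i k).
    rewrite /Defs.eta -sumrB mulr_sumr; apply: eq_bigr => j _; rewrite -mulrA mulrBr //.
  rewrite /= E [X in expR X]mulrC mulKf ?gt_eqF // in J.
  rewrite /gate -/D -mulrA; apply: le_trans (_ : expR (Defs.eta x ws i k) / D * expR (Defs.eta x w i k - Defs.eta x ws i k) <= _).
    rewrite expRB le_eqVlt; apply/orP; left; apply/eqP; field.
    by rewrite !gt_eqF ?expR_gt0.
  apply: ler_wpM2l; first by rewrite divr_ge0 ?expR_ge0 ?ltW.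
  by rewrite -(ler_pM2l N0) mulrA mulfV ?gt_eqF // mul1r.
have := @ln_bound _ C D C0 D0.
have : C / D = (C - 1) / D + D^-1 by rewrite mulrBl mul1r subrK.
lra.
Qed.

Theorem theorem1 (R : realType) (n p K : nat) (hn : (0 < n)%N) (hp : (0 < p)%N)
  (hK : (2 <= K)%N) (x : 'I_n -> 'I_p -> R) (ws : 'I_K.-1 -> 'I_p.+1 -> R) :
  minorizes (fun a b : R => a <= b) (I1 x) (G1 x ^~ ws) ws.
Proof.
split.
  move=> w; rewrite /G1 /I1 -sumrN; apply: ler_sum => i _; exact: term_le.
rewrite /G1 /I1 -sumrN; apply: eq_bigr => i _.
have D0 := @Cm_gt0 _ _ _ _ x ws i.
have -> : \sum_(k < K.-1) (gate x ws i k / (p.+1)%:R *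
          \sum_(j < p.+1) expR ((p.+1)%:R * xaug x i j * (ws k j - ws k j)))
   = 1 - (Cm x ws i)^-1.
  have -> : 1 - (Cm x ws i)^-1 = \sum_(k < K.-1) gate x ws i k.
    rewrite /gate -mulr_suml.
    have -> : \sum_(k < K.-1) expR (Defs.eta x ws i k) = Cm x ws i - 1 by rewrite /Cm addrC addKr.
    by rewrite mulrBl mul1r mulfV ?gt_eqF.
  apply: eq_bigr => k _.
  under eq_bigr do rewrite subrr mulr0 expR0.
  rewrite sumr_const card_ord -mulr_natr mul1r mulfVK // pnatr_eq0 //.
rewrite /Cm; lra.
Qed.
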